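(* For every connected graph $G$ with no isolated vertices, $$\gamma_t(G) \le \left\lceil \frac{2(\gamma(G)+\gamma_c(G))}{3}\right\rceil.$$ Moreover, this bound is tight.
   Context: All graphs are finite, simple and undirected. A set $S\subseteq V(G)$ is a dominating set if every vertex not in $S$ is adjacent to some vertex of $S$; $\gamma(G)$ is the minimum size of a dominating set. A set $S$ is a total dominating set if every vertex of $G$ (including those in $S$) is adjacent to some vertex of $S$; $\gamma_t(G)$ is the minimum size of a total dominating set. A set $S$ is a connected dominating set if it is dominating and the subgraph induced by $S$ is connected; $\gamma_c(G)$ is the minimum size of a connected dominating set. *)

(* Defs.v *)
From mathcomp Require Import all_boot.
Set Implicit Arguments. Unset Strict Implicit. Unset Printing Implicit Defensive.

Section Domination.
Variable T : finType.
Variable e : rel T.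

Definition simple_graph : Prop := symmetric e /\ irreflexive e.

Definition connected_graph : Prop :=
  0 < #|T| /\ forall x y : T, connect e x y.

Definition no_isolated : Prop := forall x : T, exists y : T, e x y.

Definition dominating (S : {set T}) : bool :=
  [forall x, (x \in S) || [exists y in S, e y x]].

Definition total_dominating (S : {set T}) : bool :=
  [forall x, [exists y in S, e y x]].

Definition induced_connected (S : {set T}) : bool :=
  [forall x in S, forall y in S,
     connect [rel u v | [&& e u v, u \in S & v \in S]] x y].

Definition connected_dominating (S : {set T}) : bool :=
  dominating S && induced_connected S.

(* minimum cardinality of a set satisfying P; the default #|T| is only used
   when no such set exists, which never happens under the hypotheses of the
   theorem (setT is a dominating / total dominating / connected dominating set
   of a connected graph without isolated vertices). *)
Definition min_card (P : pred {set T}) : nat :=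
  \big[minn/#|T|]_(S : {set T} | P S) #|S|.

Definition gamma : nat := min_card dominating.
Definition gamma_t : nat := min_card total_dominating.
Definition gamma_c : nat := min_card connected_dominating.

End Domination.

Definition ceil_div (a b : nat) : nat := (a + b.-1) %/ b.

(* Main.v *)
Require Import Defs.
From mathcomp Require Import all_boot.
From mathcomp Require Import zify.
Set Implicit Arguments. Unset Strict Implicit.

Section L.
Variable T : finType.

Lemma min_card_le (P : pred {set T}) S : P S -> min_card P <= #|S|.
Proof.
move=> PS; rewrite /min_card -big_filter.
have : S \in [seq x <- index_enum {set T} | P x] by rewrite mem_filter PS mem_index_enum.
elim: [seq _ <- _ | _] => // a s IH; rewrite big_cons inE.
case/orP => [/eqP <-|/IH]; first exact: geq_minl.
by move=> h; rewrite geq_min h orbT.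
Qed.

Lemma min_card_ge (P : pred {set T}) k :
  (forall S, P S -> k <= #|S|) -> k <= #|T| -> k <= min_card P.
Proof.
move=> H HT; rewrite /min_card.
elim/big_ind: _ => //.
- by move=> a b Ha Hb; rewrite leq_min Ha Hb.


Qed.

Lemma min_card_ex (P : pred {set T}) S0 : P S0 ->
  exists S, P S /\ #|S| = min_card P.
Proof.
move=> P0.
case: (arg_minnP (fun S : {set T} => #|S|) P0) => S PS Hmin.
exists S; split => //; apply/eqP; rewrite eqn_leq.
rewrite min_card_le // andbT.
apply: min_card_ge => //; exact: max_card.
Qed.
End L.

Section G.
Variables (T : finType) (e : rel T).
Hypotheses (Hs : simple_graph e) (Hc : connected_graph e) (Hn : no_isolated e).

Lemma setT_cd : connected_dominating e setT.
Proof.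
apply/andP; split.
  by apply/forallP => x; rewrite in_setT.
apply/forallP => x; apply/implyP => _; apply/forallP => y; apply/implyP => _.
rewrite (@eq_connect _ _ e); first by case: Hc.
by move=> u v /=; rewrite !in_setT !andbT.
Qed.

Lemma g_le_gc : gamma e <= gamma_c e.
Proof.
rewrite /gamma_c /gamma /gamma_t; have [C [HC <-]] := min_card_ex setT_cd.
by apply: min_card_le; case/andP: HC.
Qed.

Lemma dom_setT : dominating e setT.
Proof. by apply/forallP => x; rewrite in_setT. Qed.

Lemma gt_le_2g : gamma_t e <= 2 * gamma e.
Proof.
rewrite /gamma_c /gamma /gamma_t; have [D [HD <-]] := min_card_ex dom_setT.
pose f x := xchoose (Hn x).
have Hf x : e x (f x) := xchooseP (Hn x).
case: Hs => sym _.
apply: (@leq_trans #|D :|: f @: D|).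
  apply: min_card_le; apply/forallP => x.
  case: (boolP (x \in D)) => xD.
    by apply/existsP; exists (f x); rewrite !inE imset_f ?orbT //= sym Hf.
  move/forallP: HD => /(_ x); rewrite (negbTE xD) /= => /existsP [y /andP [yD eyx]].
  by apply/existsP; exists y; rewrite !inE yD.
apply: leq_trans (leq_card_setU _ _) _.
by rewrite mul2n -addnn leq_add2l leq_imset_card.
Qed.

Lemma gt_le_gc : 2 <= gamma_c e -> gamma_t e <= gamma_c e.
Proof.
rewrite /gamma_c /gamma /gamma_t; have [C [HC <-]] := min_card_ex setT_cd.
move=> H2; apply: min_card_le.
case/andP: HC => HD HI.
case: Hs => sym _.
apply/forallP => x.
case: (boolP (x \in C)) => xC; last first.
  move/forallP: HD => /(_ x); rewrite (negbTE xC) /= => /existsP [y /andP [yD eyx]].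
  by apply/existsP; exists y; rewrite yD.
have [z [zC zx]] : exists z, z \in C /\ z != x.
  case/card_gt1P: H2 => a [b [aC bC ab]].
  case: (eqVneq a x) => [ax|ax]; last by exists a.
  by exists b; split => //; rewrite -ax eq_sym.
move/forallP: HI => /(_ x); rewrite xC /= => /forallP /(_ z); rewrite zC /=.
case/connectP => [[|u p]] /=; first by move=> _ zx'; rewrite zx' eqxx in zx.
case/andP => /and3P [exu _ uC] _ _.
by apply/existsP; exists u; rewrite uC sym.
Qed.

Lemma main_bound : gamma_t e <= ceil_div (2 * (gamma e + gamma_c e)) 3.
Proof.
have h1 := gt_le_2g; have h2 := g_le_gc; have h3 := gt_le_gc.
rewrite /ceil_div /=.
case: (leqP 2 (gamma_c e)) => h; [have := h3 h|]; lia.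
Qed.
End G.

Section K.
Variable n : nat.
Definition Kn : rel 'I_n.+2 := fun x y => x != y.

Lemma Kn_gt1 (S : {set 'I_n.+2}) : total_dominating Kn S -> 2 <= #|S|.
Proof.
move/forallP=> H; case/existsP: (H ord0) => y /andP [yS _].
case/existsP: (H y) => z /andP [zS zy].
by apply/card_gt1P; exists z, y.
Qed.

Lemma Kn_gt0 (S : {set 'I_n.+2}) : dominating Kn S -> 1 <= #|S|.
Proof.
move/forallP=> /(_ ord0) /orP [h|/existsP [y /andP [yS _]]]; apply/card_gt0P; by eauto.
Qed.

Lemma Kn_facts : [/\ simple_graph Kn, connected_graph Kn, no_isolated Kn, n <= #|'I_n.+2| &
  gamma_t Kn = ceil_div (2 * (gamma Kn + gamma_c Kn)) 3].
Proof.
have sg : simple_graph Kn by split; [move=> x y; rewrite /Kn eq_sym | move=> x; rewrite /Kn eqxx].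
have cg : connected_graph Kn.
  split; first by rewrite card_ord.
  move=> x y; case: (eqVneq x y) => [->|xy]; first exact: connect0.
  by apply: connect1.
have ni : no_isolated Kn.
  move=> x; case: (eqVneq x ord0) => [->|x0]; last by exists ord0.
  by exists ord_max.
split => //; first by rewrite card_ord; lia.
have d1 : dominating Kn [set ord0].
  apply/forallP => x; rewrite inE; case: (eqVneq x ord0) => //= x0.
  by apply/existsP; exists ord0; rewrite inE eqxx /Kn eq_sym.
have c1 : connected_dominating Kn [set ord0].
  rewrite /connected_dominating d1 /=.
  apply/forallP => x; apply/implyP; rewrite inE => /eqP ->.
  apply/forallP => y; apply/implyP; rewrite inE => /eqP ->.
  exact: connect0.
have t2 : total_dominating Kn [set ord0; ord_max].
  apply/forallP => x; case: (eqVneq x ord0) => [->|x0].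
    by apply/existsP; exists ord_max; rewrite !inE eqxx orbT.
  by apply/existsP; exists ord0; rewrite !inE eqxx /Kn /= eq_sym x0.
have g1 : gamma Kn = 1.
  apply/eqP; rewrite eqn_leq; apply/andP; split.
    by apply: leq_trans (min_card_le d1) _; rewrite cards1.
  by apply: min_card_ge; [exact: Kn_gt0 | rewrite card_ord].
have gc1 : gamma_c Kn = 1.
  apply/eqP; rewrite eqn_leq; apply/andP; split.
    by apply: leq_trans (min_card_le c1) _; rewrite cards1.
  apply: min_card_ge; last by rewrite card_ord.
  by move=> S /andP [/Kn_gt0].
have gt2 : gamma_t Kn = 2.
  apply/eqP; rewrite eqn_leq; apply/andP; split.
    by apply: leq_trans (min_card_le t2) _; rewrite cards2.
  by apply: min_card_ge; [exact: Kn_gt1 | rewrite card_ord].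
by rewrite g1 gc1 gt2.
Qed.
End K.

Theorem theorem2p3 :
  (forall (T : finType) (e : rel T),
      simple_graph e -> connected_graph e -> no_isolated e ->
      gamma_t e <= ceil_div (2 * (gamma e + gamma_c e)) 3)
  /\
  (* tightness: equality holds for arbitrarily large such graphs *)
  (forall n : nat, exists (T : finType) (e : rel T),
      [/\ simple_graph e, connected_graph e, no_isolated e, n <= #|T| &
          gamma_t e = ceil_div (2 * (gamma e + gamma_c e)) 3]).
Proof.
split; first by move=> T e Hs Hc Hn; exact: main_bound.
by move=> n; exists 'I_n.+2, (@Kn n); exact: Kn_facts.
Qed.
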